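(* For every ideal $I\subset\mathbb{K}[S_M]$ and every sparse order $\prec$ on $\mathbb{K}[S_M]$, there exists a finite sparse Gröbner basis of $I$ with respect to $\prec$.
   Context: Let $\mathbb{K}$ be a field of characteristic $0$, $M\subset\mathbb{R}^n$ a polytope with $0\in M$, $S_M\subset\mathbb{Z}^n$ the affine semigroup generated by $M\cap\mathbb{Z}^n$ and $S_M^h\subset\mathbb{Z}^{n+1}$ the one generated by $\{(s,1):s\in M\cap\mathbb{Z}^n\}$, both assumed pointed. $\mathbb{K}[S]$ is the semigroup algebra with monomials $X^s$, $X^sX^t=X^{s+t}$. The affine degree $\delta^A(X^s)$ of a monomial of $\mathbb{K}[S_M]$ is the least $d\in\mathbb{N}$ with $(s,d)\in S_M^h$; the homogenization of a monomial is $\chi^{-1}(X^s)=X^{(s,\delta^A(X^s))}\in\mathbb{K}[S_M^h]$, and for $X^{(s,d)}\in\mathbb{K}[S_M^h]$ its sparse degree is $\delta(X^{(s,d)})=\delta^A(X^s)$. A sparse order is defined from a monomial order $<_M$ on $\mathbb{K}[S_M]$ by $X^s\prec X^r$ iff $\delta^A(X^s)<\delta^A(X^r)$, or equality and $X^s<_MX^r$. Divisibility: $X^{(s,d_s)}\mid_\delta X^{(r,d_r)}$ if some monomial $X^{(t,d_t)}\in\mathbb{K}[S_M^h]$ satisfies $X^{(s,d_s)}X^{(t,d_t)}=X^{(r,d_r)}$ and $\delta(X^{(s,d_s)})+\delta(X^{(t,d_t)})=\delta(X^{(r,d_r)})$; for monomials of $\mathbb{K}[S_M]$, $X^s\mid_\delta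 X^r$ iff $\chi^{-1}(X^s)\mid_\delta\chi^{-1}(X^r)$. A sparse Gröbner basis of $I$ w.r.t. $\prec$ is a subset of $I$ generating $I$ such that every nonzero $f\in I$ has some element $g$ of it with $\mathrm{LM}_\prec(g)\mid_\delta\mathrm{LM}_\prec(f)$. *)

(* Defs.v *)
From HB Require Import structures.
From mathcomp Require Import all_boot all_order all_algebra.
From mathcomp Require Import finmap.
From mathcomp Require Import reals.
From mathcomp.multinomials Require Import monalg.

Set Implicit Arguments.
Unset Strict Implicit.
Unset Printing Implicit Defensive.

Import Order.TTheory GRing.Theory Num.Theory.
Local Open Scope ring_scope.

Definition inPolytope (R : realType) (n : nat) (V : seq 'rV[R]_n)
    (x : 'rV[R]_n) : Prop :=
  exists lam : 'I_(size V) -> R,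
    (forall i, 0 <= lam i) /\ \sum_i lam i = 1 /\
    x = \sum_i lam i *: V`_i.

Definition latPt (R : realType) (n : nat) (V : seq 'rV[R]_n)
    (z : 'rV[int]_n) : Prop :=
  inPolytope V (map_mx (fun k : int => k%:~R : R) z).

Inductive inSM (R : realType) (n : nat) (V : seq 'rV[R]_n) : 'rV[int]_n -> Prop :=
  | SM0 : inSM V 0
  | SMadd a s : latPt V a -> inSM V s -> inSM V (a + s).

(* S_M^h : generated by the (s,1), s \in M \cap Z^n; an element (s,d) of
   Z^{n+1} is represented by the pair s, d (its last coordinate is always
   a natural number). *)
Inductive inShM (R : realType) (n : nat) (V : seq 'rV[R]_n) :
    'rV[int]_n -> nat -> Prop :=
  | Sh0 : inShM V 0 0
  | Shadd a s d : latPt V a -> inShM V s d -> inShM V (a + s) d.+1.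

Definition pointedSM (R : realType) (n : nat) (V : seq 'rV[R]_n) : Prop :=
  forall s, inSM V s -> inSM V (- s) -> s = 0.

Definition isAdeg (R : realType) (n : nat) (V : seq 'rV[R]_n)
    (s : 'rV[int]_n) (d : nat) : Prop :=
  inShM V s d /\ forall d', inShM V s d' -> (d <= d')%N.

(* Elements of K[Z^n] are finitely supported
   functions {malg K['rV[int]_n]}; K[S_M] is the subset of those with
   support in S_M; the product is X^s X^t = X^(s+t) extended bilinearly. *)
Definition inKS (R : realType) (n : nat) (V : seq 'rV[R]_n) (K : fieldType)
    (f : {malg K['rV[int]_n]}) : Prop :=
  forall s, s \in msupp f -> inSM V s.

Definition smul (n : nat) (K : fieldType) (f g : {malg K['rV[int]_n]})
    : {malg K['rV[int]_n]} :=
  \sum_(s <- msupp f) \sum_(t <- msupp g) << f@_s * g@_t *g (s + t) >>.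

Definition isIdeal (R : realType) (n : nat) (V : seq 'rV[R]_n) (K : fieldType)
    (I : {malg K['rV[int]_n]} -> Prop) : Prop :=
  [/\ forall f, I f -> inKS V f,
      I 0,
      forall f g, I f -> I g -> I (f - g) &
      forall f g, inKS V f -> I g -> I (smul f g)].

Definition monomialOrder (R : realType) (n : nat) (V : seq 'rV[R]_n)
    (lt : 'rV[int]_n -> 'rV[int]_n -> Prop) : Prop :=
  [/\ forall s, inSM V s -> ~ lt s s,
      forall s t u, inSM V s -> inSM V t -> inSM V u ->
        lt s t -> lt t u -> lt s u,
      forall s t, inSM V s -> inSM V t -> s <> t -> lt s t \/ lt t s,
      forall s t u, inSM V s -> inSM V t -> inSM V u ->
        lt s t -> lt (s + u) (t + u) &
      forall P : 'rV[int]_n -> Prop, (exists s, inSM V s /\ P s) ->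
        exists m, [/\ inSM V m, P m & forall s, inSM V s -> P s -> ~ lt s m]].

Definition sparseLt (R : realType) (n : nat) (V : seq 'rV[R]_n)
    (lt : 'rV[int]_n -> 'rV[int]_n -> Prop) (s r : 'rV[int]_n) : Prop :=
  exists ds dr, [/\ isAdeg V s ds, isAdeg V r dr &
                    (ds < dr)%N \/ (ds = dr /\ lt s r)].

Definition sdivh (R : realType) (n : nat) (V : seq 'rV[R]_n)
    (s : 'rV[int]_n) (ds : nat) (r : 'rV[int]_n) (dr : nat) : Prop :=
  exists t dt, [/\ inShM V t dt, s + t = r, (ds + dt)%N = dr &
    exists es et er, [/\ isAdeg V s es, isAdeg V t et, isAdeg V r er &
                        (es + et)%N = er]].

(* For monomials of K[S_M]: X^s |_delta X^r iff
   chi^{-1}(X^s) |_delta chi^{-1}(X^r) *)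
Definition sdiv (R : realType) (n : nat) (V : seq 'rV[R]_n)
    (s r : 'rV[int]_n) : Prop :=
  exists ds dr, [/\ isAdeg V s ds, isAdeg V r dr & sdivh V s ds r dr].

Definition isLM (n : nat) (K : fieldType)
    (lt : 'rV[int]_n -> 'rV[int]_n -> Prop)
    (f : {malg K['rV[int]_n]}) (s : 'rV[int]_n) : Prop :=
  s \in msupp f /\ forall t, t \in msupp f -> t <> s -> lt t s.

Definition sparseGB (R : realType) (n : nat) (V : seq 'rV[R]_n) (K : fieldType)
    (lt : 'rV[int]_n -> 'rV[int]_n -> Prop)
    (I : {malg K['rV[int]_n]} -> Prop) (G : seq {malg K['rV[int]_n]}) : Prop :=
  [/\ forall g, g \in G -> I g,
      forall f, I f -> exists h : 'I_(size G) -> {malg K['rV[int]_n]},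
        (forall i, inKS V (h i)) /\ f = \sum_i smul (h i) G`_i &
      forall f, I f -> f <> 0 ->
        exists2 g, g \in G &
          exists sg sf, [/\ isLM (sparseLt V lt) g sg,
                            isLM (sparseLt V lt) f sf & sdiv V sg sf]].

(* Main.v *)
Require Import Defs.
From HB Require Import structures.
From mathcomp Require Import all_boot all_order all_algebra.
From mathcomp Require Import finmap.
From mathcomp Require Import reals.
From mathcomp.multinomials Require Import monalg.
From Stdlib Require Import Classical.
From Stdlib Require List.
Set Implicit Arguments. Unset Strict Implicit. Unset Printing Implicit Defensive.

Definition lek (k : nat) (a b : nat -> nat) := forall i, (i < k)%N -> (a i <= b i)%N.
Definition FBk k := forall A : (nat -> nat) -> Prop, exists B : seq (nat -> nat),
  (forall b, List.In b B -> A b) /\ forall a, A a -> exists b, List.In b B /\ lek k b a.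

Lemma lek_trans k a b c : lek k a b -> lek k b c -> lek k a c.
Proof. by move=> h1 h2 i hi; apply: leq_trans (h1 i hi) (h2 i hi). Qed.

Lemma FB0 : FBk 0.
Proof.
move=> A; case: (classic (exists a, A a)) => [[a Aa]|nA].
  exists [:: a]; split=> [b [<-|[]] //|a' _]; exists a; split; first by left.
  by move=> i.
exists [::]; split=> [b []|a Aa]; exfalso; apply: nA; by exists a.
Qed.

Lemma FBS k : FBk k -> FBk k.+1.
Proof.
move=> IH A.
have layers : forall M, exists B : seq (nat -> nat),
   (forall b, List.In b B -> A b /\ (b k <= M)%N) /\
   forall a, A a -> (a k <= M)%N -> exists b, List.In b B /\ lek k b a /\ b k = a k.
  elim=> [|M [B' [HB'1 HB'2]]].
    have [B [HB1 HB2]] := IH (fun a => A a /\ a k = 0%N).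
    exists B; split=> [b /HB1 [Ab ->] //|a Aa].
    rewrite leqn0 => /eqP ak; have [b [inb lba]] := HB2 a (conj Aa ak).
    by exists b; split=> //; split=> //; have [_ ->] := HB1 b inb.
  have [B [HB1 HB2]] := IH (fun a => A a /\ a k = M.+1).
  exists (B' ++ B); split=> [b /List.in_app_iff [/HB'1 [Ab bk]|/HB1 [Ab ->]] //|a Aa].
    by split=> //; apply: leqW.
  rewrite leq_eqVlt ltnS => /orP [/eqP ak|akM].
    have [b [inb lba]] := HB2 a (conj Aa ak).
    exists b; split; first by apply/List.in_app_iff; right.
    by split=> //; have [_ ->] := HB1 b inb.
  have [b [inb lba]] := HB'2 a Aa akM.
  by exists b; split=> //; apply/List.in_app_iff; left.
have [B0 [HB01 HB02]] := IH A.
pose M := foldr maxn 0%N (map (fun b => b k) B0).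
have HM : forall b, List.In b B0 -> (b k <= M)%N.
  rewrite /M; clear M HB01 HB02; elim: B0 => [|c B0 IHB] b //= [<-|inb].
    by rewrite leq_maxl.
  by apply: leq_trans (IHB b inb) (leq_maxr _ _).
have [B [HB1 HB2]] := layers M.
exists B; split=> [b /HB1 [] //|a Aa].
have [ak|akM] := leqP (a k) M.
  have [b [inb [lba bak]]] := HB2 a Aa ak.
  exists b; split=> // i; rewrite ltnS leq_eqVlt => /orP [/eqP ->|ik].
    by rewrite bak.
  exact: lba.
have [b0 [inb0 lb0a]] := HB02 a Aa.
have [b [inb [lbb0 bb0]]] := HB2 b0 (HB01 b0 inb0) (HM b0 inb0).
exists b; split=> // i; rewrite ltnS leq_eqVlt => /orP [/eqP ->|ik].
  by rewrite bb0; apply: ltnW; apply: leq_ltn_trans (HM b0 inb0) akM.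
exact: lek_trans lbb0 lb0a i ik.
Qed.

Lemma dickson k : FBk k.
Proof. elim: k => [|k IH]; [exact: FB0 | exact: FBS]. Qed.

Import Order.TTheory GRing.Theory Num.Theory.
Local Open Scope ring_scope.

Lemma latPt_bound (R : realType) (n : nat) (V : seq 'rV[R]_n) :
  exists N : nat, forall z, latPt V z -> forall j, `|z 0 j| <= N%:Z.
Proof.
pose C : R := \sum_(i < size V) \sum_(j < n) `|V`_i 0 j|.
have C0 : 0 <= C by apply: sumr_ge0 => i _; apply: sumr_ge0.
have HC : forall (i : 'I_(size V)) j, `|V`_i 0 j| <= C.
  move=> i j; rewrite /C (bigD1 i) //= (bigD1 j) //= -addrA lerDl.
  by apply: addr_ge0; apply: sumr_ge0 => *; [apply: normr_ge0| apply: sumr_ge0].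
exists (Num.bound C) => z [lam [lam0 [lam1 zE]]] j.
have : (z 0 j)%:~R = \sum_i lam i * V`_i 0 j :> R.
  have := congr1 (fun M : 'M_(1,n) => M 0 j) zE.
  by rewrite mxE summxE /= => ->; apply: eq_bigr => i _; rewrite mxE.
move=> zj.
have : `|z 0 j|%:~R <= C :> R.
  rewrite intr_norm zj; apply: le_trans (ler_norm_sum _ _ _) _.
  apply: le_trans (_ : \sum_i lam i * C <= C).
    apply: ler_sum => i _; rewrite normrM ger0_norm //.
    by apply: ler_wpM2l => //; exact: HC.
  by rewrite -mulr_suml lam1 mul1r.
move=> h; have := le_lt_trans h (archi_boundP C0).
rewrite -[((Num.bound C)%:R : R)]/((Num.bound C)%:Z%:~R).
by rewrite ltr_int => /ltW.
Qed.


Lemma box_enum (n N : nat) : exists Q : seq 'rV[int]_n,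
  forall z : 'rV[int]_n, (forall j, `|z 0 j| <= N%:Z) -> z \in Q.
Proof.
pose g (f : {ffun 'I_n -> 'I_(N + N).+1}) : 'rV[int]_n :=
  \row_j ((f j : nat)%:Z - N%:Z).
exists [seq g f | f <- enum {ffun 'I_n -> 'I_(N + N).+1}] => z hz.
apply/mapP; exists [ffun j => inord (absz (z 0 j + N%:Z))]; first by rewrite mem_enum.
apply/rowP => j; rewrite /g !mxE ffunE inordK.
  have : 0 <= z 0 j + N%:Z.
    by rewrite -lerBlDr sub0r; have := hz j; rewrite ler_norml => /andP [].
  by move/gez0_abs => ->; rewrite addrK.
rewrite ltnS -(@lez_nat) abszE ger0_norm.
  by rewrite PoszD lerD2r; have := hz j; rewrite ler_norml => /andP [].
by rewrite -lerBlDr sub0r; have := hz j; rewrite ler_norml => /andP [].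
Qed.

Lemma filter_classic (T : eqType) (P : T -> Prop) (Q : seq T) :
  exists L : seq T, forall z, z \in L <-> (z \in Q /\ P z).
Proof.
elim: Q => [|q Q [L HL]]; first by exists [::] => z; split=> [|[]].
case: (classic (P q)) => Pq.
  exists (q :: L) => z; rewrite !in_cons; split.
    by case/orP => [/eqP ->|/HL [-> ?]]; rewrite ?eqxx //; split=> //; rewrite orbT.
  by case=> /orP [/eqP ->|zQ] Pz; rewrite ?eqxx // (proj2 (HL z)) ?orbT.
exists L => z; rewrite in_cons; split.
  by move/HL => [-> ?]; rewrite orbT.
by case=> /orP [/eqP -> //|zQ] Pz; apply/HL.
Qed.


Lemma ex_least (Q : nat -> Prop) : (exists d, Q d) ->
  exists d, Q d /\ forall d', Q d' -> (d <= d')%N.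
Proof.
move=> [d Qd]; elim: d {-2}d (leqnn d) Qd => [|N IH] d.
  by rewrite leqn0 => /eqP -> Q0; exists 0%N.
rewrite leq_eqVlt => /orP [/eqP ->|]; last by rewrite ltnS; apply: IH.
move=> QN; case: (classic (exists d', Q d' /\ (d' <= N)%N)) => [[d' [Qd' le]]|nQ].
  exact: IH le Qd'.
exists N.+1; split=> // d' Qd'; rewrite ltnNge; apply/negP => le; apply: nQ.
by exists d'.
Qed.

Section Semi.
Variables (R : realType) (n : nat) (V : seq 'rV[R]_n).

Lemma inShM_add s d s' d' : inShM V s d -> inShM V s' d' ->
  inShM V (s + s') (d + d').
Proof.
elim=> [|a s1 d1 La _ IH] h; first by rewrite add0r add0n.
by rewrite -addrA addSn; apply: Shadd => //; apply: IH.
Qed.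

Lemma inShM_inSM s d : inShM V s d -> inSM V s.
Proof. by elim=> [|a s1 d1 La _ IH]; [apply: SM0 | apply: SMadd]. Qed.

Lemma inSM_inShM s : inSM V s -> exists d, inShM V s d.
Proof.
elim=> [|a s1 La _ [d IH]]; first by exists 0%N; apply: Sh0.
by exists d.+1; apply: Shadd.
Qed.

Lemma adeg_ex s : inSM V s -> exists d, isAdeg V s d.
Proof. by move/inSM_inShM/ex_least. Qed.

Lemma adeg_uniq s d d' : isAdeg V s d -> isAdeg V s d' -> d = d'.
Proof.
move=> [h1 m1] [h2 m2]; apply/eqP; rewrite eqn_leq.
by rewrite (m1 _ h2) (m2 _ h1).
Qed.

Lemma adeg_inSM s d : isAdeg V s d -> inSM V s.
Proof. by case=> /inShM_inSM. Qed.

Lemma adeg_subadd s ds t dt d : isAdeg V s ds -> isAdeg V t dt ->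
  isAdeg V (s + t) d -> (d <= ds + dt)%N.
Proof. by move=> [h1 _] [h2 _] [_ m]; apply: m; apply: inShM_add. Qed.

Lemma sdiv_of s ds r dr t dt : isAdeg V s ds -> isAdeg V r dr ->
  inShM V t dt -> s + t = r -> (ds + dt)%N = dr -> sdiv V s r.
Proof.
move=> As Ar Ht str e.
have [et At] := adeg_ex (inShM_inSM Ht).
have etdt : (et <= dt)%N by case: At => _ m; apply: m.
have : (dr <= ds + et)%N by apply: adeg_subadd As At _; rewrite str.
rewrite -e leq_add2l => dtet.
have ee : et = dt by apply/eqP; rewrite eqn_leq etdt dtet.
exists ds, dr; split=> //; exists t, dt; split=> //.
by exists ds, et, dr; split=> //; rewrite ee.
Qed.

Variable lt : 'rV[int]_n -> 'rV[int]_n -> Prop.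
Hypothesis hlt : monomialOrder V lt.

Lemma sLt_inSM s r : sparseLt V lt s r -> inSM V s /\ inSM V r.
Proof. by case=> ds [dr [As Ar _]]; split; apply: adeg_inSM; eauto. Qed.

Lemma sLt_trans s t u : sparseLt V lt s t -> sparseLt V lt t u -> sparseLt V lt s u.
Proof.
case: hlt => _ htr _ _ _.
move=> [ds [dt [As At h1]]] [dt' [du [At' Au h2]]].
have e := adeg_uniq At At'; subst dt'.
exists ds, du; split=> //.
case: h1 h2 => [l1|[e1 l1]] [l2|[e2 l2]].
- by left; apply: ltn_trans l1 l2.
- by left; rewrite -e2.
- by left; rewrite e1.
- right; split; first by rewrite e1.
  by apply: htr l1 l2; apply: adeg_inSM; eauto.
Qed.

Lemma sLt_total s t : inSM V s -> inSM V t -> s <> t ->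
  sparseLt V lt s t \/ sparseLt V lt t s.
Proof.
case: hlt => _ _ htot _ _ Ss St ne.
have [ds As] := adeg_ex Ss; have [dt At] := adeg_ex St.
have [l|l|e] := ltngtP ds dt.
- by left; exists ds, dt; split=> //; left.
- by right; exists dt, ds; split=> //; left.
case: (htot s t Ss St ne) => h.
  by left; exists ds, dt; split=> //; right.
by right; exists dt, ds; split=> //; right.
Qed.

Lemma LM_list (l : seq 'rV[int]_n) : l != [::] -> (forall s, s \in l -> inSM V s) ->
  exists2 m, m \in l & forall t, t \in l -> t <> m -> sparseLt V lt t m.
Proof.
elim: l => [//|x l IH] _ Hl.
have Sx : inSM V x by apply: Hl; rewrite mem_head.
case: (altP (l =P [::])) => [->|lne].
  by exists x; rewrite ?mem_head // => t; rewrite inE => /eqP.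
have [m ml Hm] := IH lne (fun s sl => Hl s (@mem_behead _ (x :: l) s sl)).
have Sm : inSM V m by apply: Hl; rewrite in_cons ml orbT.
case: (eqVneq x m) => [xm|xm].
  exists m; first by rewrite in_cons ml orbT.
  move=> t; rewrite in_cons => /orP [/eqP ->|tl]; first by rewrite xm.
  exact: Hm.
case: (sLt_total Sx Sm (elimN eqP xm)) => h.
  exists m; first by rewrite in_cons ml orbT.
  by move=> t; rewrite in_cons => /orP [/eqP ->|tl] //; apply: Hm.
exists x; first by rewrite mem_head.
move=> t; rewrite in_cons => /orP [/eqP -> //|tl] tx.
case: (eqVneq t m) => [->//|tm].
exact: sLt_trans (Hm t tl (elimN eqP tm)) h.
Qed.

End Semi.


Section Malg.
Variables (n : nat) (K : fieldType).
Local Notation MA := {malg K['rV[int]_n]}.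

Lemma smul_w (d : {fset 'rV[int]_n}) (f g : MA) : (msupp f `<=` d)%fset ->
  smul f g = \sum_(s <- d) \sum_(t <- msupp g) << f@_s * g@_t *g (s + t) >>.
Proof.
move=> le; rewrite /smul (big_fset_incl _ le) //.
move=> k _ /mcoeff_outdom ->.
by rewrite big1 // => t _; rewrite mul0r monalgU0.
Qed.

Lemma smul0 (g : MA) : smul 0 g = 0.
Proof. by rewrite /smul msupp0 big_seq_fset0. Qed.

Lemma smulD (f1 f2 g : MA) : smul (f1 + f2) g = smul f1 g + smul f2 g.
Proof.
have l1 : (msupp f1 `<=` msupp f1 `|` msupp f2)%fset by apply: fsubsetUl.
have l2 : (msupp f2 `<=` msupp f1 `|` msupp f2)%fset by apply: fsubsetUr.
rewrite (smul_w _ (msuppD_le f1 f2)) (smul_w _ l1) (smul_w _ l2) -big_split /=.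
apply: eq_bigr => s _; rewrite -big_split /=; apply: eq_bigr => t _.
by rewrite mcoeffD mulrDl monalgUD.
Qed.

Lemma smulU_coef (c : K) (t u : 'rV[int]_n) (g : MA) :
  (smul << c *g t >> g)@_u = \sum_(v <- msupp g) (c * g@_v) *+ (t + v == u).
Proof.
rewrite (smul_w _ msuppU_le) big_seq_fset1 raddf_sum /=.
by apply: eq_bigr => v _; rewrite mcoeffUU mcoeffU.
Qed.

Lemma inKS_add (R : realType) (V : seq 'rV[R]_n) (f g : MA) :
  inKS V f -> inKS V g -> inKS V (f + g).
Proof.
move=> hf hg s /(fsubsetP (msuppD_le f g)); rewrite in_fsetU => /orP [].
  exact: hf. exact: hg.
Qed.

Lemma inKS0 (R : realType) (V : seq 'rV[R]_n) : inKS V (0 : MA).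
Proof. by move=> s; rewrite msupp0. Qed.

Lemma inKSU (R : realType) (V : seq 'rV[R]_n) (c : K) t :
  inSM V t -> inKS V << c *g t >>.
Proof. by move=> St s /(fsubsetP msuppU_le); rewrite inE => /eqP ->. Qed.

End Malg.


Section Ev.
Variables (R : realType) (n : nat) (V : seq 'rV[R]_n) (P : seq 'rV[int]_n).
Hypothesis hP : forall z, latPt V z <-> z \in P.

Definition evs (a : nat -> nat) : 'rV[int]_n := \sum_(i < size P) P`_i *+ a i.
Definition degs (a : nat -> nat) : nat := (\sum_(i < size P) a i)%N.

Lemma ev_in a : inShM V (evs a) (degs a).
Proof.
rewrite /evs /degs; apply: (big_ind2 (inShM V)).
- exact: Sh0.
- by move=> x1 x2 y1 y2 h1 h2; apply: inShM_add.
move=> i _; have Li : latPt V P`_i by apply/hP; apply: mem_nth.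
elim: (a i) => [|m IH]; first exact: Sh0.
by rewrite mulrS; apply: Shadd.
Qed.

Lemma ev_add a b : evs (fun i => a i + b i)%N = evs a + evs b.
Proof. by rewrite /evs -big_split /=; apply: eq_bigr => i _; rewrite mulrnDr. Qed.

Lemma deg_add a b : degs (fun i => a i + b i)%N = (degs a + degs b)%N.
Proof. by rewrite /degs big_split. Qed.

Lemma ev_of s d : inShM V s d -> exists a, evs a = s /\ degs a = d.
Proof.
elim=> [|a0 s1 d1 La _ [a [ea da]]].
  exists (fun _ => 0%N); split; first by rewrite /evs big1.
  by rewrite /degs big1.
have a0P : a0 \in P by apply/hP.
have lt0 : (index a0 P < size P)%N by rewrite index_mem.
exists (fun i => a i + (i == index a0 P))%N.
rewrite ev_add deg_add ea da; split; last first.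
  rewrite /degs (bigD1 (Ordinal lt0)) //= eqxx big1 ?addn0 ?addn1 //.
  by move=> j /eqP jne; case: eqP => // e; exfalso; apply: jne; apply: val_inj.
rewrite addrC; congr (_ + _).
rewrite /evs (bigD1 (Ordinal lt0)) //= eqxx nth_index // big1 ?addr0 //.
by move=> j /eqP jne; case: eqP => // e; exfalso; apply: jne; apply: val_inj.
Qed.

End Ev.


Section Main.
Variables (K : fieldType) (R : realType) (n : nat) (V : seq 'rV[R]_n).
Variables (I : {malg K['rV[int]_n]} -> Prop) (lt : 'rV[int]_n -> 'rV[int]_n -> Prop).
Hypothesis hI : isIdeal V I.
Hypothesis hlt : monomialOrder V lt.
Local Notation MA := {malg K['rV[int]_n]}.
Local Notation sLt := (sparseLt V lt).

Lemma sLt_irr s : ~ sLt s s.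
Proof.
case=> [ds [ds' [A1 A2 h]]]; have e := adeg_uniq A1 A2; subst ds'.
case: h => [|[_ l]]; first by rewrite ltnn.
by case: hlt => irr _ _ _ _; apply: (irr s) => //; apply: adeg_inSM A1.
Qed.

Lemma LM_uniq (f : MA) s s' : isLM sLt f s -> isLM sLt f s' -> s = s'.
Proof.
move=> [sf Hs] [sf' Hs']; apply: NNPP => ne.
apply: (@sLt_irr s); apply: sLt_trans (Hs' s sf ne) (Hs s' sf' (fun e => ne (esym e))).
exact: hlt.
Qed.

Lemma LM_ex (f : MA) : inKS V f -> f != 0 -> exists s, isLM sLt f s.
Proof.
move=> hf fne.
have : (msupp f : seq _) != [::].
  apply/eqP => e; move/eqP: fne; apply; apply/malgP => k.
  rewrite mcoeff0; apply: mcoeff_outdom.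
  by rewrite -[k \in msupp f]/(k \in (msupp f : seq _)) e.
move=> ne; have [m mi Hm] := LM_list hlt ne hf.
by exists m; split.
Qed.


Lemma div_supp (f g : MA) m sg t dt ds dm :
  inKS V f -> inKS V g -> isLM sLt f m -> isLM sLt g sg ->
  isAdeg V sg ds -> isAdeg V m dm -> isAdeg V t dt -> sg + t = m ->
  (ds + dt)%N = dm ->
  forall u, u \in msupp (f - smul << (f@_m / g@_sg) *g t >> g) -> sLt u m.
Proof.
move=> hf hg [mf Hf] [sgg Hg] Asg Am At e edeg u.
rewrite -mcoeff_neq0 mcoeffB smulU_coef => hu.
have gsg0 : g@_sg != 0 by rewrite mcoeff_neq0.
case: (eqVneq u m) => [um|um].
  exfalso; move: hu; rewrite um (big_fsetD1 sg) //= [t + sg]addrC e eqxx mulr1n.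
  rewrite big1_fset ?addr0 ?mulfVK ?subrr ?eqxx // => v.
  rewrite !inE => /andP [vsg _] _.
  case: eqP => // ev.
  by exfalso; move/eqP: vsg; apply; apply: (addrI t); rewrite ev -e addrC.
case: (boolP (u \in msupp f)) => uf; first by apply: Hf => //; apply/eqP.
move: hu; rewrite (mcoeff_outdom uf) sub0r oppr_eq0 => hu.
have [v [vg tv]] : exists v, v \in msupp g /\ t + v = u.
  apply: NNPP => nex; move/eqP: hu; apply.
  rewrite big1_fset // => v vg _; case: eqP => // tv.
  by exfalso; apply: nex; exists v.
have vsg : v <> sg by move=> ev; move/eqP: um; apply; rewrite -tv ev addrC e.
have [dv [dsg' [Av Asg' h]]] := Hg v vg vsg.
have ee := adeg_uniq Asg Asg'; subst dsg'.
have St : inSM V t by apply: adeg_inSM At.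
have Sv : inSM V v by apply: hg.
have [du Au] := adeg_ex (inShM_inSM (inShM_add (proj1 Av) (proj1 At))).
have le_du : (du <= dv + dt)%N by apply: adeg_subadd Av At Au.
have Sg : inSM V sg by apply: hg.
rewrite -tv addrC; exists du, dm; split=> //.
case: h => [l|[edv l]].
  by left; rewrite -edeg; apply: leq_ltn_trans le_du _; rewrite ltn_add2r.
have : (du <= dm)%N by rewrite -edeg -edv.
rewrite leq_eqVlt => /orP [/eqP edu|]; last by left.
right; split=> //; rewrite -e.
by case: hlt => _ _ _ comp _; apply: comp.
Qed.


Lemma main_GB : exists G, sparseGB V lt I G.
Proof.
case: (hI) => hI1 hI2 hI3 hI4.
have [N HN] := latPt_bound V.
have [Q HQ] := box_enum n N.
have [P HP0] := filter_classic (latPt V) Q.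
have hP : forall z, latPt V z <-> z \in P.
  move=> z; split=> [Lz|/HP0 [] //]; apply/HP0; split=> //.
  by apply: HQ; apply: HN.
pose Lset s := exists f, I f /\ f <> 0 /\ isLM sLt f s.
pose A (a : nat -> nat) := exists s, Lset s /\ evs P a = s /\ isAdeg V s (degs P a).
have [B [HB1 HB2]] := dickson (size P) A.
have [G [HG1 HG2]] : exists G : seq MA, (forall g, g \in G -> I g) /\
    forall b, List.In b B -> exists2 g, g \in G & isLM sLt g (evs P b).
  clear HB2; elim: B HB1 => [|b B IH] HB; first by exists [::]; split.
  have [G [HG1 HG2]] := IH (fun b' h => HB b' (or_intror h)).
  have [s [[f [If [_ LMf]]] [es _]]] := HB b (or_introl erefl).
  exists (f :: G); split.
    by move=> g; rewrite in_cons => /orP [/eqP -> //|]; apply: HG1.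
  move=> b' [<-|inb]; first by exists f; rewrite ?mem_head // es.
  by have [g gG LMg] := HG2 b' inb; exists g => //; rewrite in_cons gG orbT.
have cond3 : forall f, I f -> f <> 0 -> exists2 g, g \in G &
    exists sg sf, [/\ isLM sLt g sg, isLM sLt f sf & sdiv V sg sf].
  move=> f If fne.
  have [sf LMf] := LM_ex (hI1 f If) (introN eqP fne).
  have Ssf : inSM V sf := hI1 f If sf (proj1 LMf).
  have [dr Ar] := adeg_ex Ssf.
  have [a [ea da]] := ev_of hP (proj1 Ar).
  have Aa : A a by exists sf; split; [exists f | split; [|rewrite da]].
  have [b [inb leb]] := HB2 a Aa.
  have [s' [_ [eb Ab]]] := HB1 b inb.
  have [g gG LMg] := HG2 b inb.
  exists g => //; exists (evs P b), sf; split => //.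
  pose c i := (a i - b i)%N.
  have eab : forall i, (i < size P)%N -> a i = (b i + c i)%N.
    by move=> i hi; rewrite /c subnKC // leb.
  have hs : evs P a = evs P b + evs P c.
    by rewrite -ev_add; apply: eq_bigr => i _; rewrite eab.
  have hd : degs P a = (degs P b + degs P c)%N.
    by rewrite -deg_add; apply: eq_bigr => i _; rewrite eab.
  apply: (@sdiv_of _ _ _ _ (degs P b) _ dr (evs P c) (degs P c)).
  - by rewrite eb.
  - exact: Ar.
  - exact: (ev_in hP).
  - by rewrite -ea hs.
  - by rewrite -da hd.
exists G; split => //.
pose Rep f := exists h : 'I_(size G) -> MA,
  (forall i, inKS V (h i)) /\ f = \sum_i smul (h i) G`_i.
have Rep0 : Rep 0.
  exists (fun _ => 0); split; first by move=> i; apply: inKS0.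
  by rewrite big1 // => i _; rewrite smul0.
move=> f If; apply: NNPP => nRep.
pose Qs s := exists f, I f /\ f <> 0 /\ isLM sLt f s /\ ~ Rep f.
have QsS : forall s, Qs s -> inSM V s.
  by move=> s [f1 [If1 [_ [[sf1 _] _]]]]; apply: hI1 If1 _ sf1.
have [s0 Q0] : exists s, Qs s.
  have fne : f <> 0 by move=> e; apply: nRep; rewrite e.
  have [s LMs] := LM_ex (hI1 f If) (introN eqP fne).
  by exists s, f.
have [s1 As1] := adeg_ex (QsS s0 Q0).
have [D [[sD [QsD AD]] HD]] :=
  @ex_least (fun d => exists s, Qs s /\ isAdeg V s d) (ex_intro _ s1 (ex_intro _ s0 (conj Q0 As1))).
have [m [Sm [Qm Am] Hm]] : exists m, [/\ inSM V m, Qs m /\ isAdeg V m D &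
    forall s, inSM V s -> Qs s /\ isAdeg V s D -> ~ lt s m].
  by case: hlt => _ _ _ _ wo; apply: wo; exists sD; split=> //; apply: QsS.
have minm : forall s, Qs s -> ~ sLt s m.
  move=> s Qs_s [ds [dm [As Am' h]]].
  have edm := adeg_uniq Am Am'; subst dm.
  case: h => [l|[eds l]].
    by have := HD ds (ex_intro _ s (conj Qs_s As)); rewrite leqNgt l.
  by apply: (Hm s (QsS s Qs_s)) l; split=> //; rewrite -eds.
case: Qm => f0 [If0 [f0ne [LMf0 nRep0]]].
have [g gG [sg [sf [LMg LMf sdv]]]] := cond3 f0 If0 f0ne.
have esf := LM_uniq LMf LMf0; subst sf.
case: sdv => ds [dr [Asg Am' [t [dt [Ht e1 e2 [es [et [er [Aes Aet Aer e3]]]]]]]]].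
have ee1 := adeg_uniq Asg Aes; have ee2 := adeg_uniq Am' Aer.
move: e3; rewrite -ee1 -ee2 => e3.
have eet : et = dt by apply/eqP; rewrite -(eqn_add2l ds) e3 e2.
subst et.
pose mono : MA := << (f0@_m / g@_sg) *g t >>.
have Smono : inKS V mono by apply: inKSU; apply: (inShM_inSM Ht).
have Ig : I g := HG1 g gG.
pose f' := f0 - smul mono g.
have If' : I f' by apply: hI3 => //; apply: hI4.
have Rf' : Rep f'.
  case: (eqVneq f' 0) => [-> //|f'ne].
  have [s' LMs'] := LM_ex (hI1 f' If') f'ne.
  have lts' : sLt s' m.
    exact: (div_supp (hI1 f0 If0) (hI1 g Ig) LMf0 LMg Asg Am' Aet e1 e2 (proj1 LMs')).
  apply: NNPP => nR; apply: (minm s') => //.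
  by exists f'; split=> //; split; [apply/eqP | split].
apply: nRep0; case: Rf' => h [hS hE].
have gi : (index g G < size G)%N by rewrite index_mem.
pose i0 : 'I_(size G) := Ordinal gi.
have Gi0 : G`_i0 = g by rewrite /= nth_index.
exists (fun j => h j + (if j == i0 then mono else 0)); split.
  by move=> j; apply: inKS_add => //; case: (j == i0) => //; apply: inKS0.
have -> : f0 = f' + smul mono g by rewrite /f' subrK.
rewrite hE [RHS](eq_bigr _ (fun j _ => smulD _ _ _)).
rewrite big_split /=; congr (_ + _).
rewrite (bigD1 i0) //= eqxx Gi0 big1 ?addr0 // => j /negbTE ->.
by rewrite smul0.
Qed.

End Main.


Theorem mainTheorem6 (K : fieldType) (hK : [pchar K] =i pred0)
    (R : realType) (n : nat) (V : seq 'rV[R]_n)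
    (h0M : inPolytope V 0) (hpt : pointedSM V)
    (I : {malg K['rV[int]_n]} -> Prop) (hI : isIdeal V I)
    (lt : 'rV[int]_n -> 'rV[int]_n -> Prop) (hlt : monomialOrder V lt) :
  exists G : seq {malg K['rV[int]_n]}, sparseGB V lt I G.
Proof. exact: (main_GB hI hlt). Qed.
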